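(* Let $n\ge 1$ be an integer, let $\varepsilon\in(0,1)$ and set $\delta=-\frac{\log_2(1-\varepsilon)}{n}$. Then every channel $W$ satisfies $$\frac{\mathcal{R}^{(\varepsilon)}_{W,n}}{2}-\delta\;\le\;\mathcal{R}^{(0)}_{W,n}.$$ Consequently, with $\delta^*=-\log_2(1-\varepsilon)$, every channel $W$ satisfies $\frac{\mathcal{R}^{(\varepsilon)}_{W}}{2}-\delta^*\le \mathcal{R}^{(0)}_{W}$.
   Context: Fix an integer $q\ge 1$, $Q=2^q$, $[Q]=\{1,\dots,Q\}$. A (two-source/two-terminal deterministic) channel is a function $W=(W_1,W_2)$ with $W_i:[Q]^2\to\mathcal{O}$ for some finite output alphabet $\mathcal{O}$. For block length $n$, $W^{(n)}=(W^{(n)}_1,W^{(n)}_2)$ acts coordinatewise: for $x=(x_1,\dots,x_n),y=(y_1,\dots,y_n)\in[Q]^n$, $W^{(n)}_i(x,y)=(W_i(x_1,y_1),\dots,W_i(x_n,y_n))$. A code of block length $n$ with message sets $[M_1],[M_2]$ consists of encoders $E_i:[M_i]\to[Q]^n$ and decoders $D_i:\mathcal{O}^n\to[M_i]$ ($i=1,2$); it succeeds on $(m_1,m_2)$ if $D_i(W^{(n)}_i(E_1(m_1),E_2(m_2)))=m_i$ for both $i=1,2$. A rate pair $(R_1,R_2)$ is achievable with probability $1-\varepsilon$ and block length $n$ if, with $M_i=2^{R_in}$ (positive integers), some code succeeds with probability at least $1-\varepsilon$ when $(m_1,m_2)$ is uniform on $[M_1]\times[M_2]$. The $\varepsilon$-error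 sum capacity is $\mathcal{R}^{(\varepsilon)}_{W,n}=\sup(R_1+R_2)$ over such pairs, and $\mathcal{R}^{(\varepsilon)}_{W}=\sup_n\mathcal{R}^{(\varepsilon)}_{W,n}$. For $\varepsilon=0$ the code must succeed on every message pair. Logarithms are base 2. *)

(* Defs.v *)
From mathcomp Require Import all_boot.
From Stdlib Require Import Reals ClassicalEpsilon.

Set Implicit Arguments.
Unset Strict Implicit.
Unset Printing Implicit Defensive.

Definition log2 (x : R) : R := (ln x / ln 2)%R.

(* Input alphabet [Q] with Q = 2^q is 'I_(2^q) (0-indexed). Words of length n
   are {ffun 'I_n -> 'I_(2^q)}. A channel component W_i : [Q]^2 -> O. *)
Definition word (q n : nat) := {ffun 'I_n -> 'I_(2 ^ q)}.

Definition chan_n (q : nat) (O : finType) (Wi : 'I_(2 ^ q) -> 'I_(2 ^ q) -> O)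
  (n : nat) (x y : word q n) : {ffun 'I_n -> O} :=
  [ffun k => Wi (x k) (y k)].

Definition succ_count (q : nat) (O : finType)
  (W1 W2 : 'I_(2 ^ q) -> 'I_(2 ^ q) -> O) (n M1 M2 : nat)
  (E1 : 'I_M1 -> word q n) (E2 : 'I_M2 -> word q n)
  (D1 : {ffun 'I_n -> O} -> 'I_M1) (D2 : {ffun 'I_n -> O} -> 'I_M2) : nat :=
  #|[set p : 'I_M1 * 'I_M2 |
      (D1 (chan_n W1 (E1 p.1) (E2 p.2)) == p.1)
      && (D2 (chan_n W2 (E1 p.1) (E2 p.2)) == p.2)]|.

(* Some code with message sets [M1],[M2] succeeds with probability >= 1 - eps
   for uniformly random messages. *)
Definition code_exists (q : nat) (O : finType)
  (W1 W2 : 'I_(2 ^ q) -> 'I_(2 ^ q) -> O) (n M1 M2 : nat) (eps : R) : Prop :=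
  exists (E1 : 'I_M1 -> word q n) (E2 : 'I_M2 -> word q n)
         (D1 : {ffun 'I_n -> O} -> 'I_M1) (D2 : {ffun 'I_n -> O} -> 'I_M2),
    (INR (succ_count W1 W2 E1 E2 D1 D2) >= (1 - eps) * INR (M1 * M2))%R.

Definition achievable (q : nat) (O : finType)
  (W1 W2 : 'I_(2 ^ q) -> 'I_(2 ^ q) -> O) (n : nat) (eps R1 R2 : R) : Prop :=
  exists M1 M2 : nat, (0 < M1)%N /\ (0 < M2)%N /\
    Rpower 2 (R1 * INR n) = INR M1 /\ Rpower 2 (R2 * INR n) = INR M2 /\
    code_exists W1 W2 n M1 M2 eps.

Definition sum_rates (q : nat) (O : finType)
  (W1 W2 : 'I_(2 ^ q) -> 'I_(2 ^ q) -> O) (n : nat) (eps : R) : R -> Prop :=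
  fun r => exists R1 R2 : R, achievable W1 W2 n eps R1 R2 /\ r = (R1 + R2)%R.

Definition Rsup (S : R -> Prop) : R := epsilon (inhabits 0%R) (is_lub S).

Definition sum_cap_n (q : nat) (O : finType)
  (W1 W2 : 'I_(2 ^ q) -> 'I_(2 ^ q) -> O) (n : nat) (eps : R) : R :=
  Rsup (sum_rates W1 W2 n eps).

Definition sum_cap (q : nat) (O : finType)
  (W1 W2 : 'I_(2 ^ q) -> 'I_(2 ^ q) -> O) (eps : R) : R :=
  Rsup (fun r => exists n : nat, (1 <= n)%N /\ r = sum_cap_n W1 W2 n eps).

(* Main.v *)
Require Import Defs.
From mathcomp Require Import all_boot.
From Stdlib Require Import Reals ClassicalEpsilon Lra.

Lemma ln_mono (x y : R) : (0 < x)%R -> (x <= y)%R -> (ln x <= ln y)%R.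
Proof.
move=> hx [h|->]; [apply: Rlt_le; exact: ln_increasing | apply: Rle_refl].
Qed.

Lemma Rsup_lub (S : R -> Prop) : (exists x, S x) ->
  (exists M, forall x, S x -> (x <= M)%R) -> is_lub S (Rsup S).
Proof.
move=> [x Sx] [M HM]; rewrite /Rsup; apply: epsilon_spec.
have [m Hm] := completeness S (ex_intro _ M HM) (ex_intro _ x Sx).
by exists m.
Qed.

Lemma rate_ln (R1 : R) (n M : nat) :
  Rpower 2 (R1 * INR n) = INR M -> (R1 * INR n * ln 2 = ln (INR M))%R.
Proof. by rewrite /Rpower => <-; rewrite ln_exp. Qed.

Lemma succ_le (q : nat) (O : finType)
  (W1 W2 : 'I_(2 ^ q) -> 'I_(2 ^ q) -> O) (n M1 M2 : nat)
  (E1 : 'I_M1 -> word q n) (E2 : 'I_M2 -> word q n)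
  (D1 : {ffun 'I_n -> O} -> 'I_M1) (D2 : {ffun 'I_n -> O} -> 'I_M2) :
  (succ_count W1 W2 E1 E2 D1 D2 <= expn (expn #|O| 2) n)%N.
Proof.
rewrite /succ_count; set S := [set p | _].
pose f := fun p : 'I_M1 * 'I_M2 =>
  (chan_n W1 (E1 p.1) (E2 p.2), chan_n W2 (E1 p.1) (E2 p.2)).
rewrite -(card_in_imset (f:=f)); last first.
  move=> [a b] [c d]; rewrite !inE /= => /andP[/eqP h1 /eqP h2] /andP[/eqP h3 /eqP h4] [e1 e2].
  have -> : a = c by rewrite -h1 -h3 e1.
  by have -> : b = d by rewrite -h2 -h4 e2.
apply: leq_trans (max_card _) _.
rewrite card_prod card_ffun card_ord.
by rewrite -expnMn mulnn.
Qed.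

Lemma row_exists (q : nat) (O : finType)
  (W1 W2 : 'I_(2 ^ q) -> 'I_(2 ^ q) -> O) (n M1 M2 : nat)
  (E1 : 'I_M1 -> word q n) (E2 : 'I_M2 -> word q n)
  (D1 : {ffun 'I_n -> O} -> 'I_M1) (D2 : {ffun 'I_n -> O} -> 'I_M2) (eps : R) :
  (0 < M2)%N ->
  (INR (succ_count W1 W2 E1 E2 D1 D2) >= (1 - eps) * INR (M1 * M2))%R ->
  exists m2 : 'I_M2, ((1 - eps) * INR M1 <= INR #|[set m1 : 'I_M1 |
      (D1 (chan_n W1 (E1 m1) (E2 m2)) == m1) && (D2 (chan_n W2 (E1 m1) (E2 m2)) == m2)]|)%R.
Proof.
move=> M2pos Hs.
set rowc := fun m2 : 'I_M2 => #|[set m1 : 'I_M1 |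
      (D1 (chan_n W1 (E1 m1) (E2 m2)) == m1) && (D2 (chan_n W2 (E1 m1) (E2 m2)) == m2)]|.
have Hsum : succ_count W1 W2 E1 E2 D1 D2 = \sum_(m2 : 'I_M2) rowc m2.
  rewrite /succ_count -sum1_card big_mkcond /=.
  set S := [set p | _].
  transitivity (\sum_(p : 'I_M1 * 'I_M2) (fun a b => if (a, b) \in S then 1 else 0) p.1 p.2)%N.
    by apply: eq_bigr => -[a b].
  rewrite -(pair_bigA addn (fun (a : 'I_M1) (b : 'I_M2) => if (a,b) \in S then 1 else 0)%N).
  rewrite exchange_big /=; apply: eq_bigr => m2 _.
  rewrite /rowc -sum1_card [RHS]big_mkcond /=; apply: eq_bigr => m1 _.
  by rewrite !inE.
have cM2 : (0 < #|'I_M2|)%N by rewrite card_ord.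
have [m2 Hm] := eq_bigmax rowc cM2.
exists m2.
have Hle : (succ_count W1 W2 E1 E2 D1 D2 <= rowc m2 * M2)%N.
  rewrite Hsum -Hm.
  apply: (leq_trans (@leq_sum _ (index_enum _) xpredT rowc (fun _ => \max_i rowc i) (fun i _ => leq_bigmax i))).
  by rewrite big_const_ord iter_addn_0.
move: (le_INR _ _ (elimT leP Hle)) => {}Hle; rewrite mult_INR in Hle; rewrite mult_INR in Hs.
have HM2 : (0 < INR M2)%R by apply: lt_0_INR; apply/ltP.
apply: (Rmult_le_reg_r (INR M2)) => //.
rewrite -/(rowc m2); lra.
Qed.

Lemma col_exists (q : nat) (O : finType)
  (W1 W2 : 'I_(2 ^ q) -> 'I_(2 ^ q) -> O) (n M1 M2 : nat)
  (E1 : 'I_M1 -> word q n) (E2 : 'I_M2 -> word q n)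
  (D1 : {ffun 'I_n -> O} -> 'I_M1) (D2 : {ffun 'I_n -> O} -> 'I_M2) (eps : R) :
  (0 < M1)%N ->
  (INR (succ_count W1 W2 E1 E2 D1 D2) >= (1 - eps) * INR (M1 * M2))%R ->
  exists m1 : 'I_M1, ((1 - eps) * INR M2 <= INR #|[set m2 : 'I_M2 |
      (D1 (chan_n W1 (E1 m1) (E2 m2)) == m1) && (D2 (chan_n W2 (E1 m1) (E2 m2)) == m2)]|)%R.
Proof.
move=> M1pos Hs.
set colc := fun m1 : 'I_M1 => #|[set m2 : 'I_M2 |
      (D1 (chan_n W1 (E1 m1) (E2 m2)) == m1) && (D2 (chan_n W2 (E1 m1) (E2 m2)) == m2)]|.
have Hsum : succ_count W1 W2 E1 E2 D1 D2 = \sum_(m1 : 'I_M1) colc m1.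
  rewrite /succ_count -sum1_card big_mkcond /=.
  set S := [set p | _].
  transitivity (\sum_(p : 'I_M1 * 'I_M2) (fun a b => if (a, b) \in S then 1 else 0) p.1 p.2)%N.
    by apply: eq_bigr => -[a b].
  rewrite -(pair_bigA addn (fun (a : 'I_M1) (b : 'I_M2) => if (a,b) \in S then 1 else 0)%N).
  apply: eq_bigr => m1 _.
  rewrite /colc -sum1_card [RHS]big_mkcond /=; apply: eq_bigr => m2 _.
  by rewrite !inE.
have cM1 : (0 < #|'I_M1|)%N by rewrite card_ord.
have [m1 Hm] := eq_bigmax colc cM1.
exists m1.
have Hle : (succ_count W1 W2 E1 E2 D1 D2 <= colc m1 * M1)%N.
  rewrite Hsum -Hm.
  apply: (leq_trans (@leq_sum _ (index_enum _) xpredT colc (fun _ => \max_i colc i) (fun i _ => leq_bigmax i))).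
  by rewrite big_const_ord iter_addn_0.
move: (le_INR _ _ (elimT leP Hle)) => {}Hle; rewrite mult_INR in Hle; rewrite mult_INR in Hs.
have HM1 : (0 < INR M1)%R by apply: lt_0_INR; apply/ltP.
apply: (Rmult_le_reg_r (INR M1)) => //.
rewrite -/(colc m1); lra.
Qed.

Lemma rate_ach (q : nat) (O : finType)
  (W1 W2 : 'I_(2 ^ q) -> 'I_(2 ^ q) -> O) (n k : nat) (eps : R) :
  (1 <= n)%N -> (0 < k)%N -> code_exists W1 W2 n k 1 eps ->
  achievable W1 W2 n eps (ln (INR k) / ln 2 / INR n) 0.
Proof.
move=> n1 k0 C; exists k, 1%N; do 2!split => //.
have Hn : INR n <> 0%R by apply: not_0_INR; apply/eqP; rewrite -lt0n.
have Hl2 : ln 2 <> 0%R by have := ln_lt_2; lra.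
have Hk : (0 < INR k)%R by apply: lt_0_INR; apply/ltP.
split; last split => //.
  rewrite /Rpower; replace (ln (INR k) / ln 2 / INR n * INR n * ln 2)%R with (ln (INR k)) by (field; auto).
  by rewrite exp_ln.
by rewrite /Rpower Rmult_0_l Rmult_0_l exp_0.
Qed.

Lemma row_code (q : nat) (O : finType)
  (W1 W2 : 'I_(2 ^ q) -> 'I_(2 ^ q) -> O) (n M1 M2 : nat)
  (E1 : 'I_M1 -> word q n) (E2 : 'I_M2 -> word q n)
  (D1 : {ffun 'I_n -> O} -> 'I_M1) (m2 : 'I_M2) (T : {set 'I_M1}) :
  (forall m1, m1 \in T -> D1 (chan_n W1 (E1 m1) (E2 m2)) == m1) ->
  (0 < #|T|)%N -> code_exists W1 W2 n #|T| 1 0.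
Proof.
move=> HT kpos; pose i0 := Ordinal kpos.
exists (fun i => E1 (enum_val i)), (fun _ => E2 m2),
  (fun y => odflt i0 [pick i | enum_val i == D1 y]), (fun _ => @ord0 0).
have -> : succ_count W1 W2 (fun i => E1 (enum_val i)) (fun _ => E2 m2)
  (fun y => odflt i0 [pick i | enum_val i == D1 y]) (fun _ => @ord0 0) = (#|T| * 1)%N.
  rewrite /succ_count; transitivity #|[set: 'I_#|T| * 'I_1]|.
    apply: eq_card => -[i j]; rewrite !inE /= (ord1 j) eqxx andbT.
    case: pickP => [j' /eqP h | /(_ i)].
      apply/eqP; apply: enum_val_inj; rewrite h; apply/eqP; apply: HT; exact: enum_valP.
    by rewrite (eqP (HT _ (enum_valP i))) eqxx.
  by rewrite cardsT card_prod !card_ord.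
rewrite Rminus_0_r Rmult_1_l; apply: Rle_ge; apply Rle_refl.
Qed.

Lemma col_code (q : nat) (O : finType)
  (W1 W2 : 'I_(2 ^ q) -> 'I_(2 ^ q) -> O) (n M1 M2 : nat)
  (E1 : 'I_M1 -> word q n) (E2 : 'I_M2 -> word q n)
  (D2 : {ffun 'I_n -> O} -> 'I_M2) (m1 : 'I_M1) (T : {set 'I_M2}) :
  (forall m2, m2 \in T -> D2 (chan_n W2 (E1 m1) (E2 m2)) == m2) ->
  (0 < #|T|)%N -> code_exists W1 W2 n 1 #|T| 0.
Proof.
move=> HT kpos; pose i0 := Ordinal kpos.
exists (fun _ => E1 m1), (fun i => E2 (enum_val i)), (fun _ => @ord0 0),
  (fun y => odflt i0 [pick i | enum_val i == D2 y]).
have -> : succ_count W1 W2 (fun _ => E1 m1) (fun i => E2 (enum_val i)) (fun _ => @ord0 0)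
  (fun y => odflt i0 [pick i | enum_val i == D2 y]) = (1 * #|T|)%N.
  rewrite /succ_count; transitivity #|[set: 'I_1 * 'I_#|T|]|.
    apply: eq_card => -[j i]; rewrite !inE /= (ord1 j) eqxx /=.
    case: pickP => [j' /eqP h | /(_ i)].
      apply/eqP; apply: enum_val_inj; rewrite h; apply/eqP; apply: HT; exact: enum_valP.
    by rewrite (eqP (HT _ (enum_valP i))) eqxx.
  by rewrite cardsT card_prod !card_ord.
rewrite Rminus_0_r Rmult_1_l; apply: Rle_ge; apply Rle_refl.
Qed.

Lemma INR_expn (a n : nat) : INR (expn a n) = (INR a ^ n)%R.
Proof. elim: n => [|n IH] //=; by rewrite expnS mult_INR IH. Qed.

Lemma pow2_pos (q : nat) : (0 < 2 ^ q)%N.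
Proof.
apply/ltP; apply Nat.neq_0_lt_0; apply: Nat.pow_nonzero; discriminate.
Qed.

Definition Bnd (O : finType) (eps : R) : R :=
  ((2 * ln (INR #|O|) - ln (1 - eps)) / ln 2)%R.

Lemma ln2_pos : (0 < ln 2)%R.
Proof. have := ln_lt_2; lra. Qed.

Lemma rates_bound (q : nat) (O : finType)
  (W1 W2 : 'I_(2 ^ q) -> 'I_(2 ^ q) -> O) (n : nat) (eps : R) :
  (1 <= n)%N -> (0 <= eps < 1)%R ->
  forall r, sum_rates W1 W2 n eps r -> (r <= Bnd O eps)%R.
Proof.
move=> n1 He r [R1 [R2 [[M1 [M2 [M1p [M2p [HR1 [HR2 [E1 [E2 [D1 [D2 Hc]]]]]]]]]] ->]]].
have x0 : 'I_(2 ^ q) := (E1 (Ordinal M1p)) (Ordinal n1).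
have Op : (0 < INR #|O|)%R.
  apply: lt_0_INR; apply/ltP. apply/card_gt0P. exact: (ex_intro _ (W1 x0 x0) isT).
have Hs := @succ_le _ _ W1 W2 _ _ _ E1 E2 D1 D2.
move: (le_INR _ _ (elimT leP Hs)) => {}Hs.
rewrite !INR_expn in Hs.
have L1 := rate_ln _ _ _ HR1; have L2 := rate_ln _ _ _ HR2.
have P1 : (0 < INR M1)%R by apply: lt_0_INR; apply/ltP.
have P2 : (0 < INR M2)%R by apply: lt_0_INR; apply/ltP.
have Pe : (0 < 1 - eps)%R by lra.
have Pn : (0 < INR n)%R by apply: lt_0_INR; apply/ltP.
have Hk : ((1 - eps) * INR M1 * INR M2 <= (INR #|O| ^ 2) ^ n)%R.
  rewrite mult_INR -Rmult_assoc in Hc; lra.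
have := ln_mono _ _ (Rmult_lt_0_compat _ _ (Rmult_lt_0_compat _ _ Pe P1) P2) Hk.
rewrite ln_pow; last by apply: pow_lt.
rewrite ln_pow // !ln_mult //; last exact: Rmult_lt_0_compat.
rewrite -L1 -L2 (_ : INR 2 = 2%R) // => H.
have Hl : (ln (1 - eps) <= 0)%R by rewrite -ln_1; apply: ln_mono; lra.
have Hn1 : (1 <= INR n)%R by apply: (le_INR 1); apply/leP.
rewrite /Bnd; apply: (Rmult_le_reg_r (ln 2)); first exact: ln2_pos.
have l2 := ln2_pos.
replace ((2 * ln (INR #|O|) - ln (1 - eps)) / ln 2 * ln 2)%R
  with (2 * ln (INR #|O|) - ln (1 - eps))%R by (field; lra).
apply: (Rmult_le_reg_l (INR n)) => //.
have : (0 <= (INR n - 1) * (- ln (1 - eps)))%R by apply Rmult_le_pos; lra.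
move=> h; clear Hk Hs Hc; nra.
Qed.

Lemma rate_ach2 (q : nat) (O : finType)
  (W1 W2 : 'I_(2 ^ q) -> 'I_(2 ^ q) -> O) (n k : nat) (eps : R) :
  (1 <= n)%N -> (0 < k)%N -> code_exists W1 W2 n 1 k eps ->
  achievable W1 W2 n eps 0 (ln (INR k) / ln 2 / INR n).
Proof.
move=> n1 k0 C; exists 1%N, k; do 2!split => //.
have Hn : INR n <> 0%R by apply: not_0_INR; apply/eqP; rewrite -lt0n.
have Hl2 : ln 2 <> 0%R by have := ln_lt_2; lra.
have Hk : (0 < INR k)%R by apply: lt_0_INR; apply/ltP.
split; first by rewrite /Rpower Rmult_0_l Rmult_0_l exp_0.
split => //.
rewrite /Rpower; replace (ln (INR k) / ln 2 / INR n * INR n * ln 2)%R with (ln (INR k)) by (field; auto).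
by rewrite exp_ln.
Qed.

Lemma code_mono (q : nat) (O : finType)
  (W1 W2 : 'I_(2 ^ q) -> 'I_(2 ^ q) -> O) (n M1 M2 : nat) (eps : R) :
  (0 <= eps)%R -> code_exists W1 W2 n M1 M2 0 -> code_exists W1 W2 n M1 M2 eps.
Proof.
move=> He [E1 [E2 [D1 [D2 H]]]]; exists E1, E2, D1, D2.
have := pos_INR (M1 * M2); nra.
Qed.

Lemma rates_nonempty (q : nat) (O : finType)
  (W1 W2 : 'I_(2 ^ q) -> 'I_(2 ^ q) -> O) (n : nat) (eps : R) :
  (1 <= n)%N -> (0 <= eps)%R -> exists r, sum_rates W1 W2 n eps r.
Proof.
move=> n1 He.
pose x0 : 'I_(2 ^ q) := Ordinal (pow2_pos q).
pose w : word q n := [ffun _ => x0].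
have HT : forall m1 : 'I_1, m1 \in [set: 'I_1] ->
   (fun _ : {ffun 'I_n -> O} => @ord0 0) (chan_n W1 ((fun _ : 'I_1 => w) m1) ((fun _ : 'I_1 => w) (@ord0 0))) == m1.
  by move=> m1 _; rewrite (ord1 m1).
have kp : (0 < #|[set: 'I_1]|)%N by rewrite cardsT card_ord.
have C := @row_code q O W1 W2 n 1 1 (fun _ => w) (fun _ => w) (fun _ => @ord0 0) (@ord0 0) [set: 'I_1] HT kp.
eexists; exists (ln (INR #|[set: 'I_1]|) / ln 2 / INR n)%R, 0%R; split; last reflexivity.
apply: rate_ach => //; exact: code_mono.
Qed.

Lemma key_ineq (R0 k M n l e : R) :
  (0 < n)%R -> (0 < l)%R -> (e + R0 * n * l <= k)%R ->
  (R0 <= k / l / n + (- (e / l)) / n)%R.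
Proof.
move=> hn hl h.
apply: (Rmult_le_reg_r (n * l)); first by apply: Rmult_lt_0_compat.
replace ((k / l / n + - (e / l) / n) * (n * l))%R with (k - e)%R by (field; lra).
nra.
Qed.

Lemma cap_lub (q : nat) (O : finType)
  (W1 W2 : 'I_(2 ^ q) -> 'I_(2 ^ q) -> O) (n : nat) (eps : R) :
  (1 <= n)%N -> (0 <= eps < 1)%R -> is_lub (sum_rates W1 W2 n eps) (sum_cap_n W1 W2 n eps).
Proof.
move=> n1 He; apply: Rsup_lub.
  apply: rates_nonempty => //; lra.
exists (Bnd O eps); exact: rates_bound.
Qed.

Lemma part1 (q : nat) (O : finType)
  (W1 W2 : 'I_(2 ^ q) -> 'I_(2 ^ q) -> O) (eps : R) (n : nat) :
  (0 < eps < 1)%R -> (1 <= n)%N ->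
  (sum_cap_n W1 W2 n eps <= 2 * (sum_cap_n W1 W2 n 0 + (- log2 (1 - eps)) / INR n))%R.
Proof.
move=> He n1.
have lub0 := @cap_lub q O W1 W2 n 0%R n1 (conj (Rle_refl 0) Rlt_0_1).
have lube : is_lub (sum_rates W1 W2 n eps) (sum_cap_n W1 W2 n eps).
  apply: cap_lub => //; lra.
have Pn : (0 < INR n)%R by apply: lt_0_INR; apply/ltP.
have l2 := ln2_pos.
have Pe : (0 < 1 - eps)%R by lra.
have key : forall (k M : nat) (R0 : R), Rpower 2 (R0 * INR n) = INR M -> (0 < M)%N ->
    (code_exists W1 W2 n k 1 0 \/ code_exists W1 W2 n 1 k 0) ->
    ((1 - eps) * INR M <= INR k)%R ->
    (R0 <= sum_cap_n W1 W2 n 0 + (- log2 (1 - eps)) / INR n)%R.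
  move=> k M R0 HR Mp Hc Hk.
  have PM : (0 < INR M)%R by apply: lt_0_INR; apply/ltP.
  have Pk : (0 < INR k)%R by apply: Rlt_le_trans Hk; apply: Rmult_lt_0_compat.
  have kp : (0 < k)%N by apply/ltP; apply: (INR_lt 0).
  have Hx : (ln (INR k) / ln 2 / INR n <= sum_cap_n W1 W2 n 0)%R.
    case: Hc => Hc.
      rewrite -[X in (X <= _)%R]Rplus_0_r; apply: (proj1 lub0).
      exists (ln (INR k) / ln 2 / INR n)%R, 0%R; split => //; exact: rate_ach.
    rewrite -[X in (X <= _)%R]Rplus_0_l; apply: (proj1 lub0).
    exists 0%R, (ln (INR k) / ln 2 / INR n)%R; split => //; exact: rate_ach2.
  have L := rate_ln _ _ _ HR.
  have := ln_mono _ _ (Rmult_lt_0_compat _ _ Pe PM) Hk.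
  rewrite ln_mult // -L => H.
  have := key_ineq R0 (ln (INR k)) 0 (INR n) (ln 2) (ln (1 - eps)) Pn l2 H.
  rewrite /log2 /Rdiv; lra.
apply: (proj2 lube) => r [R1 [R2 [[M1 [M2 [M1p [M2p [HR1 [HR2 [E1 [E2 [D1 [D2 Hc]]]]]]]]]] ->]]].
case: (Rle_dec R2 R1) => HR.
  have [m2 Hm] := @row_exists q O W1 W2 n M1 M2 E1 E2 D1 D2 eps M2p Hc.
  set T := [set m1 | _] in Hm.
  suff : (R1 <= sum_cap_n W1 W2 n 0 + (- log2 (1 - eps)) / INR n)%R by lra.
  apply: (key #|T| M1 R1 HR1 M1p _ Hm).
  have Pk : (0 < INR #|T|)%R.
    apply: Rlt_le_trans Hm; apply: Rmult_lt_0_compat => //; apply: lt_0_INR; exact/ltP.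
  have kp : (0 < #|T|)%N by apply/ltP; apply: (INR_lt 0).
  left. have HT : forall m1, m1 \in T -> D1 (chan_n W1 (E1 m1) (E2 m2)) == m1 by move=> m1; rewrite inE => /andP[].
  exact: (@row_code q O W1 W2 n M1 M2 E1 E2 D1 m2 T HT kp).
have [m1 Hm] := @col_exists q O W1 W2 n M1 M2 E1 E2 D1 D2 eps M1p Hc.
set T := [set m2 | _] in Hm.
suff : (R2 <= sum_cap_n W1 W2 n 0 + (- log2 (1 - eps)) / INR n)%R by lra.
apply: (key #|T| M2 R2 HR2 M2p _ Hm).
have Pk : (0 < INR #|T|)%R.
  apply: Rlt_le_trans Hm; apply: Rmult_lt_0_compat => //; apply: lt_0_INR; exact/ltP.
have kp : (0 < #|T|)%N by apply/ltP; apply: (INR_lt 0).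
right. have HT : forall m2, m2 \in T -> D2 (chan_n W2 (E1 m1) (E2 m2)) == m2 by move=> m2; rewrite inE => /andP[].
exact: (@col_code q O W1 W2 n M1 M2 E1 E2 D2 m1 T HT kp).
Qed.

Lemma capU_lub (q : nat) (O : finType)
  (W1 W2 : 'I_(2 ^ q) -> 'I_(2 ^ q) -> O) (eps : R) :
  (0 <= eps < 1)%R -> is_lub (fun r => exists n : nat, (1 <= n)%N /\ r = sum_cap_n W1 W2 n eps)
    (sum_cap W1 W2 eps).
Proof.
move=> He; apply: Rsup_lub.
  by exists (sum_cap_n W1 W2 1 eps), 1%N.
exists (Bnd O eps) => r [n [n1 ->]].
apply: (proj2 (@cap_lub q O W1 W2 n eps n1 He)).
exact: rates_bound.
Qed.

Theorem lemma1 (q : nat) (O : finType) (W1 W2 : 'I_(2 ^ q) -> 'I_(2 ^ q) -> O)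
  (eps : R) :
  (1 <= q)%N -> (0 < eps < 1)%R ->
  (forall n : nat, (1 <= n)%N ->
     (sum_cap_n W1 W2 n eps / 2 - (- log2 (1 - eps) / INR n)
        <= sum_cap_n W1 W2 n 0)%R) /\
  (sum_cap W1 W2 eps / 2 - (- log2 (1 - eps)) <= sum_cap W1 W2 0)%R.
Proof.
move=> _ He.
split.
  move=> n n1; have := @part1 q O W1 W2 eps n He n1; lra.
have lU0 := @capU_lub q O W1 W2 0%R (conj (Rle_refl 0) Rlt_0_1).
have lUe : is_lub (fun r => exists n : nat, (1 <= n)%N /\ r = sum_cap_n W1 W2 n eps)
    (sum_cap W1 W2 eps) by apply: capU_lub; lra.
have Hd : (0 <= - log2 (1 - eps))%R.
  have Hl : (ln (1 - eps) <= 0)%R by rewrite -ln_1; apply: ln_mono; lra.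
  have l2 := ln2_pos.
  rewrite /log2 /Rdiv; have := Rinv_0_lt_compat _ l2; nra.
suff : (sum_cap W1 W2 eps <= 2 * (sum_cap W1 W2 0 + - log2 (1 - eps)))%R by lra.
apply: (proj2 lUe) => r [n [n1 ->]].
have h1 := @part1 q O W1 W2 eps n He n1.
have h2 : (sum_cap_n W1 W2 n 0 <= sum_cap W1 W2 0)%R by apply: (proj1 lU0); exists n.
have Pn : (1 <= INR n)%R by apply: (le_INR 1); apply/leP.
have h3 : (- log2 (1 - eps) / INR n <= - log2 (1 - eps))%R.
  apply: (Rmult_le_reg_r (INR n)); first lra.
  rewrite /Rdiv Rmult_assoc Rinv_l; last lra.
  nra.
lra.
Qed.
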